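(* Let $N\ge 0$, $k\ge1$ be integers and $f:\{0,\dots,N\}^k\to\{\mathbf{true},\mathbf{false}\}$ a feasibility function, and run $\textsc{ParetoEnumerate}(N,k,f)$ (with arbitrary choices of the picked element in each iteration). Once some evaluation of $f$ during the run has returned $\mathbf{true}$ at a point $\vec x$, the algorithm never afterwards evaluates $f$ at any point $\vec y$ with $\vec x\le_k\vec y$.
   Context: For $\vec x,\vec x'\in\{0,\dots,N\}^k$, $\vec x\le_k\vec x'$ iff $x_i\le x'_i$ for all $i$; $\vec x$ is smaller than $\vec x'$ (and $\vec x'$ greater than $\vec x$) if $\vec x\le_k\vec x'$ and $\vec x\neq\vec x'$. A feasibility function is a monotone $f:\{0,\dots,N\}^k\to\{\mathbf{true},\mathbf{false}\}$: if $f(\vec x)=\mathbf{true}$ then $f(\vec x')=\mathbf{true}$ for all $\vec x'$ greater than $\vec x$. Procedure $\textsc{SearchParetoPoint}(\vec x,k,f)$: for $i=1,\dots,k$: set $\mathit{max}:=x_i+1$, $\mathit{min}:=0$; while $\mathit{max}-\mathit{min}>1$: $\mathit{mid}:=\mathit{min}+\lfloor(\mathit{max}-\mathit{min}-1)/2\rfloor$, $x_i:=\mathit{mid}$, and if $f(\vec x)=\mathbf{true}$ then $\mathit{max}:=\mathit{mid}+1$ else $\mathit{min}:=\mathit{mid}+1$; then $x_i:=\mathit{min}$. Return $\vec x$. Procedure $\textsc{ParetoEnumerate}(N,k,f)$: initialize $S:=\{(N,\dots,N)\}$ and $P:=\emptyset$. Main loop: while $S\neq\emptyset$: pick (without removing)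 some $\vec x\in S$; if $f(\vec x)=\mathbf{true}$, then set $\vec x:=\textsc{SearchParetoPoint}(\vec x,k,f)$, set $P:=P\cup\{\vec x\}$, set $S':=\emptyset$, and for each $\vec y\in S$: if not $\vec x\le_k\vec y$, add $\vec y$ to $S'$; otherwise, for each $i\in\{1,\dots,k\}$ with $x_i>0$, add $(y_1,\dots,y_{i-1},x_i-1,y_{i+1},\dots,y_k)$ to $S'$; then set $S$ to the set of elements of $S'$ that are not smaller than any other element of $S'$. Otherwise (if $f(\vec x)=\mathbf{false}$), set $S:=S\setminus\{\vec x\}$. When the loop ends, return $P$. The evaluations of $f$ made during the run are exactly the test $f(\vec x)$ on the picked element in each main-loop iteration and the tests inside $\textsc{SearchParetoPoint}$. *)

(* Defs.v *)
From mathcomp Require Import all_boot.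
Set Implicit Arguments. Unset Strict Implicit. Unset Printing Implicit Defensive.

Section Pareto.
Variables (N k : nat).

Definition point := {ffun 'I_k -> 'I_N.+1}.

Definition le_k (x y : point) : bool := [forall i, x i <= y i].
Definition smaller (x y : point) : bool := le_k x y && (x != y).

Definition feasibility (f : point -> bool) : Prop :=
  forall x y, smaller x y -> f x -> f y.

(* x with coordinate i replaced by v (v <= N in all uses) *)
Definition upd (x : point) (i : 'I_k) (v : nat) : point :=
  [ffun j => if j == i then inord v else x j].

(* The while loop of SearchParetoPoint for coordinate i: returns final min and
   the list of evaluations (point, result) in order.  The fuel equals the
   initial value of max - min, which strictly decreases in each iteration,
   so the fuel never runs out before the loop condition fails. *)
Fixpoint bsearch (f : point -> bool) (x : point) (i : 'I_k)
    (fuel mn mx : nat) : nat * seq (point * bool) :=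
  match fuel with
  | 0 => (mn, [::])
  | fuel'.+1 =>
    if 1 < mx - mn then
      let mid := mn + (mx - mn - 1)./2 in
      let xm := upd x i mid in
      let b := f xm in
      let res := if b then bsearch f x i fuel' mn mid.+1
                 else bsearch f x i fuel' mid.+1 mx in
      (res.1, (xm, b) :: res.2)
    else (mn, [::])
  end.

Definition search_coord (f : point -> bool) (st : point * seq (point * bool))
    (i : 'I_k) : point * seq (point * bool) :=
  let x := st.1 in
  let res := bsearch f x i (x i).+1 0 (x i).+1 in
  (upd x i res.1, st.2 ++ res.2).

Definition search_pareto (f : point -> bool) (x : point)
    : point * seq (point * bool) :=
  foldl (search_coord f) (x, [::]) (enum 'I_k).

Definition S'_of (S : {set point}) (x : point) : {set point} :=
  [set z | [exists y in S,
     (~~ le_k x y && (z == y)) ||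
     (le_k x y && [exists i, (0 < x i) && (z == upd y i (x i).-1)])]].

Definition maximal_part (S' : {set point}) : {set point} :=
  [set y in S' | [forall z in S', ~~ smaller y z]].

(* Reachable configurations (S, P, trace of all evaluations of f so far, in
   order) of ParetoEnumerate(N,k,f), for arbitrary choices of picked element. *)
Inductive reach (f : point -> bool) :
    {set point} -> {set point} -> seq (point * bool) -> Prop :=
  | reach_init : reach f [set [ffun => ord_max]] set0 [::]
  | reach_true S P tr x :
      reach f S P tr -> x \in S -> f x = true ->
      reach f (maximal_part (S'_of S (search_pareto f x).1))
              ((search_pareto f x).1 |: P)
              (tr ++ (x, true) :: (search_pareto f x).2)
  | reach_false S P tr x :
      reach f S P tr -> x \in S -> f x = false ->
      reach f (S :\ x) P (rcons tr (x, false)).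

End Pareto.

(* Main.v *)
Require Import Defs.
From mathcomp Require Import all_boot zify.
Set Implicit Arguments. Unset Strict Implicit. Unset Printing Implicit Defensive.

Section S.
Variables (N k : nat).
Local Notation pt := (point N k).

Definition rr (a b : pt * bool) : bool := a.2 ==> ~~ le_k a.1 b.1.

Lemma le_refl (x : pt) : le_k x x.
Proof. by apply/forallP => i. Qed.

Lemma le_trans (x y z : pt) : le_k x y -> le_k y z -> le_k x z.
Proof.
move=> /forallP H1 /forallP H2; apply/forallP => i.
exact: leq_trans (H1 i) (H2 i).
Qed.

Lemma le_anti (x y : pt) : le_k x y -> le_k y x -> x = y.
Proof.
move=> /forallP H1 /forallP H2; apply/ffunP => i; apply/val_inj => /=.
by apply/eqP; rewrite eqn_leq H1 H2.
Qed.

Lemma upd_val (x : pt) i v j : v <= N ->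
  (upd x i v j : nat) = if j == i then v else x j.
Proof. by move=> hv; rewrite /upd ffunE; case: eqP => // _; rewrite inordK. Qed.

Lemma le_upd_l (x : pt) i v : v <= x i -> le_k (upd x i v) x.
Proof.
move=> hv; apply/forallP => j; rewrite upd_val; last first.
  by apply: leq_trans hv _; rewrite -ltnS.
by case: eqP => // ->.
Qed.

Lemma le_upd_upd (x : pt) i v w : v <= w -> w <= N -> le_k (upd x i v) (upd x i w).
Proof.
move=> h1 h2; apply/forallP => j; rewrite !upd_val //; first by case: eqP.
exact: leq_trans h2.
Qed.

Lemma my_half_lt n : 0 < n -> n./2 < n.
Proof. move=> h; have := odd_double_half n; rewrite -muln2; case: (odd n) => /=; lia. Qed.

Lemma bs_spec f (x : pt) i fuel mn mx : mn < mx -> mx <= (x i).+1 ->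
  let res := bsearch f x i fuel mn mx in
  [/\ mn <= res.1 < mx,
      pairwise rr res.2 &
      forall e, e \in res.2 -> exists m, [/\ e.1 = upd x i m, m < mx.-1 &
                                            (e.2 -> res.1 <= m)]].
Proof.
elim: fuel mn mx => [|fuel IH] mn mx h1 h2 /=; first by split => //; rewrite leqnn.
case: ifP => hlt; last by split => //; rewrite leqnn.
set mid := mn + (mx - mn - 1)./2.
have hm1 : mn <= mid by rewrite leq_addr.
have hm2 : mid < mx.-1.
  have := @my_half_lt (mx - mn - 1); rewrite /mid. lia.
have hxi : (x i : nat) <= N by rewrite -ltnS.
case hb: (f (upd x i mid)).
- have [] := IH mn mid.+1 => //; first lia.
  move=> hr hp he; split => //.
  + case/andP: hr => ? ?; apply/andP; rewrite /=; split; lia.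
  + rewrite /= hp andbT; apply/allP => e /he [m [em hm _]]; rewrite /rr /= em.
    apply/negP => /forallP /(_ i); rewrite !upd_val ?eqxx //=; lia.
  + move=> e; rewrite inE => /orP [/eqP -> | /he [m [hm1' hm2' hm3']]].
      exists mid; split => //= _; case/andP: hr => _; lia.
    exists m; split => //; lia.
- have [] := IH mid.+1 mx => //; first lia.
  move=> hr hp he; split => //.
  + case/andP: hr => ? ?; apply/andP; rewrite /=; split; lia.
  + by rewrite /= hp andbT; apply/allP => e _; rewrite /rr /=.
  + move=> e; rewrite inE => /orP [/eqP -> | /he [m [hm1' hm2' hm3']]].
      by exists mid.
    exists m; split => //; lia.
Qed.

Definition Q (x0 : pt) (st : pt * seq (pt * bool)) :=
  [/\ le_k st.1 x0, all (fun e => le_k e.1 x0) st.2,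
      pairwise rr ((x0, true) :: st.2) &
      forall t, t \in (x0, true) :: st.2 -> t.2 -> le_k st.1 t.1].

Lemma not_le_upd (c : pt) i m : m < c i -> ~~ le_k c (upd c i m).
Proof.
move=> hm; apply/negP => /forallP /(_ i); rewrite upd_val ?eqxx.
  by rewrite leqNgt hm.
by have := ltn_ord (c i); lia.
Qed.

Lemma sc_spec f x0 s (st : pt * seq (pt * bool)) :
  Q x0 st -> Q x0 (foldl (search_coord f) st s).
Proof.
elim: s st => [//|i s IH] [c ev] [h1 h2 h3 h4] /=; apply: IH.
move: h1 h2 h3 h4; rewrite ![(c, ev).1]/= ![(c, ev).2]/= => h1 h2 h3 h4.
rewrite /search_coord /=.
have [] := @bs_spec f c i (c i).+1 0 (c i).+1 => //.
set res := bsearch _ _ _ _ _ _ => /andP [_ hr1] hp he.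
have hr1' : res.1 <= c i by [].
have hcN : (c i : nat) <= N by rewrite -ltnS.
have hc' : le_k (upd c i res.1) c by exact: le_upd_l.
split.
- exact: le_trans hc' h1.
- rewrite all_cat h2 /=; apply/allP => e /he [m [-> hm _]].
  apply: le_trans h1; exact: le_upd_l (ltnW hm).
- change (pairwise rr (((x0,true)::ev) ++ res.2)); rewrite pairwise_cat; apply/and3P; split => //; apply/allrelP => t y ht hy.
  apply/implyP => tt; have ct := h4 t ht tt.
  have [m [-> hm _]] := he y hy.
  apply/negP => ty; move: (not_le_upd hm) => /negP; apply.
  exact: le_trans ct ty.
- move=> t; rewrite -cat_cons mem_cat => /orP [ht tt | ht tt].
    exact: le_trans hc' (h4 t ht tt).
  have [m [-> hm hm3]] := he t ht.
  apply: le_upd_upd; first exact: hm3.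
  by apply: leq_trans hcN; apply: ltnW.
Qed.

Lemma sp_spec f (x : pt) :
  let sp := search_pareto f x in
  [/\ all (fun e => le_k e.1 x) sp.2,
      pairwise rr ((x, true) :: sp.2) &
      forall t, t \in (x, true) :: sp.2 -> t.2 -> le_k sp.1 t.1].
Proof.
rewrite /search_pareto.
have [] := @sc_spec f x (enum 'I_k) (x, [::]).
  split => //=; [exact: le_refl | by move=> t; rewrite inE => /eqP -> _; exact: le_refl].
by move=> _ *; split.
Qed.

Definition Inv (S : {set pt}) (tr : seq (pt * bool)) :=
  pairwise rr tr /\
  forall t, t \in tr -> t.2 -> forall z, z \in S -> ~~ le_k t.1 z.

Lemma inv_reach f S P tr : reach f S P tr -> Inv S tr.
Proof.
elim => [|S0 P0 tr0 x _ [IH1 IH2] xS fx|S0 P0 tr0 x _ [IH1 IH2] xS fx].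
- by split => // t; rewrite in_nil.
- have [sa sb sc] := sp_spec f x.
  set sp := search_pareto f x in sa sb sc *.
  have hz : forall z, z \in maximal_part (S'_of S0 sp.1) ->
      exists2 y, y \in S0 &
        (~~ le_k sp.1 y && (z == y)) ||
        (le_k sp.1 y && [exists c, (0 < sp.1 c) && (z == upd y c (sp.1 c).-1)]).
    move=> z; rewrite inE => /andP [+ _]; rewrite inE => /existsP [y /andP [yS hy]].
    by exists y.
  split.
  + rewrite pairwise_cat; apply/and3P; split => //; apply/allrelP => t y ht hy.
    apply/implyP => tt; apply/negP => ty.
    have yx : le_k y.1 x.
      move: hy; rewrite inE => /orP [/eqP -> | hy]; first exact: le_refl.
      exact: (allP sa y hy).
    by move: (IH2 t ht tt x xS); rewrite (le_trans ty yx).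
  + move=> t; rewrite mem_cat => /orP [ht | ht] tt z /hz [y yS hy].
    * have zy : le_k z y.
        case/orP: hy => /andP [hpy].
          by move/eqP ->; exact: le_refl.
        case/existsP => c /andP [hc /eqP ->]; apply: le_upd_l.
        move/forallP: hpy => /(_ c); lia.
      apply/negP => tz; by move: (IH2 t ht tt y yS); rewrite (le_trans tz zy).
    * have pt1 := sc t ht tt.
      apply/negP => tz; have pz := le_trans pt1 tz.
      case/orP: hy => /andP [hpy].
        by move/eqP => ezy; move: hpy; rewrite -ezy pz.
      case/existsP => c /andP [hc /eqP ezy]; move: pz; rewrite ezy.
      move/forallP => /(_ c); rewrite upd_val ?eqxx; first lia.
      have := ltn_ord (sp.1 c); lia.
- split.
  + rewrite pairwise_rcons IH1 andbT; apply/allP => t ht; apply/implyP => tt.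
    exact: IH2.
  + move=> t; rewrite mem_rcons inE => /orP [/eqP -> | ht]; first by [].
    move=> tt z; rewrite in_setD1 => /andP [_ zS]; exact: IH2.
Qed.
End S.

Theorem lemma4 (N k : nat) (k_pos : 0 < k) (f : point N k -> bool)
    (f_feas : feasibility f)
    (S P : {set point N k}) (tr : seq (point N k * bool))
    (Hrun : reach f S P tr)
    (i j : nat) (x y : point N k) (b : bool) :
  i < j -> j < size tr ->
  nth ([ffun => ord0], false) tr i = (x, true) ->
  nth ([ffun => ord0], false) tr j = (y, b) ->
  ~~ le_k x y.
Proof.
move=> hij hj hi hjj.
have [H1 _] := inv_reach Hrun.
have := (pairwiseP ([ffun => ord0], false) H1) i j.
rewrite hi hjj /rr /= => -> //; rewrite -topredE /=.
exact: ltn_trans hij hj.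
Qed.
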